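(* Let $P$ be a finite sequence of nonnegative integers. Then $P$ is mirror bigraphic if and only if the pair $(P,P)$ is bigraphic.
   Context: For sequences $P,Q$ of nonnegative integers, the pair $(P,Q)$ is bigraphic if there is a bipartite graph $G=(V_1\cup V_2,E)$ (with stable sets $V_1,V_2$) whose vertices in $V_1$ have degrees equal to the elements of $P$ and whose vertices in $V_2$ have degrees equal to the elements of $Q$; such $G$ realizes $(P,Q)$. A bipartite graph $G=(V_1\cup V_2,E)$ is mirror if there is a bijection $\varphi:V_1\to V_2$ with $u\varphi(v)\in E \iff \varphi(u)v\in E$ for all $u,v\in V_1$. A sequence $P$ is mirror bigraphic if $(P,P)$ is bigraphic and some mirror bipartite graph realizes $(P,P)$. *)

(* Defs.v *)
From mathcomp Require Import all_boot.
Set Implicit Arguments. Unset Strict Implicit. Unset Printing Implicit Defensive.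

(* A bipartite graph with stable sets V1, V2 is given by its edge relation
   E : V1 -> V2 -> bool (edges only go between V1 and V2). *)

Definition deg1 (V1 V2 : finType) (E : V1 -> V2 -> bool) (u : V1) : nat :=
  #|[pred w : V2 | E u w]|.
Definition deg2 (V1 V2 : finType) (E : V1 -> V2 -> bool) (w : V2) : nat :=
  #|[pred u : V1 | E u w]|.

Definition realizes (V1 V2 : finType) (E : V1 -> V2 -> bool)
  (P Q : seq nat) : Prop :=
  perm_eq [seq deg1 E u | u <- enum V1] P /\
  perm_eq [seq deg2 E w | w <- enum V2] Q.

Definition bigraphic (P Q : seq nat) : Prop :=
  exists (V1 V2 : finType) (E : V1 -> V2 -> bool), realizes E P Q.

Definition mirror (V1 V2 : finType) (E : V1 -> V2 -> bool) : Prop :=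
  exists phi : V1 -> V2, bijective phi /\
    forall u v : V1, E u (phi v) = E v (phi u).

Definition mirror_bigraphic (P : seq nat) : Prop :=
  bigraphic P P /\
  exists (V1 V2 : finType) (E : V1 -> V2 -> bool), mirror E /\ realizes E P P.

(* Main.v *)
Require Import Defs.
From mathcomp Require Import all_boot zify.
Set Implicit Arguments. Unset Strict Implicit. Unset Printing Implicit Defensive.

Section M.
Variable T : finType.
Implicit Types (X : {set T}) (A : T -> T -> bool).

Definition rs X A i := \sum_(j in X) (A i j : nat).
Definition cs X A j := \sum_(i in X) (A i j : nat).
Definition mis X A n := \sum_(y in X) ((A n y != A y n) : nat).
Definition sw A a b c d := fun x y =>
  if ((x == a) || (x == b)) && ((y == c) || (y == d)) then ~~ A x y else A x y.

Lemma sum2 X (f g : T -> nat) c d : c \in X -> d \in X -> c != d ->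
  (forall y, y != c -> y != d -> f y = g y) ->
  \sum_(y in X) f y + (g c + g d) = \sum_(y in X) g y + (f c + f d).
Proof.
move=> cX dX cd fg.
have dX' : (d \in X) && (d != c) by rewrite dX eq_sym cd.
rewrite (bigD1 c cX) [in RHS](bigD1 c cX) /= (bigD1 d dX') [in RHS](bigD1 d dX') /=.
rewrite (eq_bigr g); last by move=> y /andP [/andP [_ yc] yd]; apply: fg.
lia.
Qed.

Lemma strict_sum X (p q : T -> bool) y0 : y0 \in X -> p y0 -> ~~ q y0 ->
  \sum_(y in X) (p y : nat) <= \sum_(y in X) (q y : nat) ->
  exists2 y, y \in X & q y && ~~ p y.
Proof.
move=> y0X py0 qy0 Hle.
case: (boolP [exists y in X, q y && ~~ p y]) => [/exists_inP // | /exists_inP H].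
exfalso; move: Hle; apply/negP; rewrite -ltnNge.
rewrite (bigD1 y0 y0X) [Y in _ < Y](bigD1 y0 y0X) /= py0 (negbTE qy0) add0n add1n ltnS.
apply: leq_sum => y /andP [yX _].
case Eq: (q y) => //=; case Ep: (p y) => //.
exfalso; apply: H; exists y => //; by rewrite Eq Ep.
Qed.

Lemma nb_add (p q : bool) : p != q -> (~~ p : nat) + ~~ q = p + q.
Proof. by case: p; case: q. Qed.

Lemma sw_sums X A a b c d : a \in X -> b \in X -> c \in X -> d \in X ->
  A a c -> ~~ A a d -> ~~ A b c -> A b d ->
  (forall x, rs X (sw A a b c d) x = rs X A x) /\
  (forall x, cs X (sw A a b c d) x = cs X A x).
Proof.
move=> aX bX cX dX Hac Had Hbc Hbd.
have ab : a != b by apply/eqP => E; move: Hac Hbc; rewrite E => ->.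
have cd : c != d by apply/eqP => E; move: Hac Had; rewrite E => ->.
split=> x.
- case: (boolP ((x == a) || (x == b))) => Hx; last first.
    apply: eq_bigr => y _; by rewrite /sw (negbTE Hx).
  have H : \sum_(y in X) (sw A a b c d x y : nat) + (A x c + A x d)
         = \sum_(y in X) (A x y : nat) + (sw A a b c d x c + sw A a b c d x d).
    apply: (sum2 (f := fun y => (sw A a b c d x y : nat)) (g := fun y => (A x y : nat))) => // y yc yd.
    by rewrite /sw (negbTE yc) (negbTE yd) andbF.
  have E : (sw A a b c d x c : nat) + sw A a b c d x d = A x c + A x d.
    rewrite /sw Hx !eqxx /= orbT /=; apply: nb_add.
    by case/orP: Hx => /eqP ->; rewrite ?Hac ?(negbTE Had) ?(negbTE Hbc) ?Hbd.
  rewrite /rs; apply/eqP; by rewrite -(eqn_add2r (A x c + A x d)) H E.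
- case: (boolP ((x == c) || (x == d))) => Hx; last first.
    apply: eq_bigr => y _; by rewrite /sw (negbTE Hx) andbF.
  have H : \sum_(y in X) (sw A a b c d y x : nat) + (A a x + A b x)
         = \sum_(y in X) (A y x : nat) + (sw A a b c d a x + sw A a b c d b x).
    apply: (sum2 (f := fun y => (sw A a b c d y x : nat)) (g := fun y => (A y x : nat))) => // y yc yd.
    by rewrite /sw (negbTE yc) (negbTE yd).
  have E : (sw A a b c d a x : nat) + sw A a b c d b x = A a x + A b x.
    rewrite /sw Hx !eqxx /= orbT /=; apply: nb_add.
    by case/orP: Hx => /eqP ->; rewrite ?Hac ?(negbTE Had) ?(negbTE Hbc) ?Hbd.
  rewrite /cs; apply/eqP; by rewrite -(eqn_add2r (A a x + A b x)) H E.
Qed.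

Lemma step_row X A n i j : n \in X -> i \in X -> j \in X ->
  A n i -> ~~ A i n -> ~~ A n j -> A j n -> cs X A i <= cs X A j ->
  exists B, [/\ forall x, rs X B x = rs X A x, forall x, cs X B x = cs X A x
             & mis X B n < mis X A n].
Proof.
move=> nX iX jX Ani Ain Anj Ajn Hij.
have [m mX /andP [Amj Ami]] := strict_sum (p := fun m => A m i) (q := fun m => A m j) nX Ani Anj Hij.
have [Hr Hc] := sw_sums nX mX iX jX Ani Anj Ami Amj.
have ni : n != i by apply/eqP => E; move: Ani Ain; rewrite E => ->.
have nj : n != j by apply/eqP => E; move: Ajn Anj; rewrite E => ->.
have ij : i != j by apply/eqP => E; move: Ani Anj; rewrite E => ->.
exists (sw A n m i j); split => //.
set B := sw A n m i j.
have H : \sum_(y in X) ((B n y != B y n) : nat) + ((A n i != A i n) + (A n j != A j n))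
       = \sum_(y in X) ((A n y != A y n) : nat) + ((B n i != B i n) + (B n j != B j n)).
  apply: (sum2 (f := fun y => ((B n y != B y n) : nat)) (g := fun y => ((A n y != A y n) : nat))) => // y yi yj.
  by rewrite /B /sw (negbTE yi) (negbTE yj) (negbTE ni) (negbTE nj) !andbF.
have E1 : ((B n i != B i n) : nat) + (B n j != B j n) = 0.
  by rewrite /B /sw !eqxx /= (negbTE ni) (negbTE nj) !andbF /= orbT Ani (negbTE Ain) (negbTE Anj) Ajn.
have E2 : ((A n i != A i n) : nat) + (A n j != A j n) = 2.
  by rewrite Ani (negbTE Ain) (negbTE Anj) Ajn.
rewrite E1 E2 addn0 in H.
by rewrite /mis -H addn2 ltnS leqnSn.
Qed.

Definition tr A := fun x y => A y x.

Lemma mis_tr X A n : mis X (tr A) n = mis X A n.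
Proof. by apply: eq_bigr => y _; rewrite /tr eq_sym. Qed.

Lemma step_col X A n i j : n \in X -> i \in X -> j \in X ->
  A n i -> ~~ A i n -> ~~ A n j -> A j n -> rs X A j <= rs X A i ->
  exists B, [/\ forall x, rs X B x = rs X A x, forall x, cs X B x = cs X A x
             & mis X B n < mis X A n].
Proof.
move=> nX iX jX Ani Ain Anj Ajn Hij.
have [B [H1 H2 H3]] := @step_row X (tr A) n j i nX jX iX Ajn Anj Ain Ani Hij.
exists (tr B); split; [exact: H2 | exact: H1 | ]. by rewrite mis_tr -(mis_tr X A).
Qed.

Lemma agree X n : n \in X -> forall k A, mis X A n <= k ->
  (forall x, x \in X -> rs X A x = cs X A x) ->
  exists B, [/\ forall x, rs X B x = rs X A x, forall x, cs X B x = cs X A x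
             & forall y, y \in X -> B n y = B y n].
Proof.
move=> nX; elim=> [|k IH] A Hk Hrc.
- exists A; split => // y yX; apply/eqP; apply: contraTT Hk => Hy.
  by rewrite /mis (bigD1 y yX) /= Hy.
case: (boolP [exists y in X, A n y != A y n]) => [/exists_inP [y0 y0X Hy0] | /exists_inP H]; last first.
  exists A; split => // y yX; apply/eqP; apply/negPn/negP => Hy; apply: H; by exists y.
have [i iX /andP [Ani Ain]] : exists2 i, i \in X & A n i && ~~ A i n.
  move: Hy0; case E1: (A n y0); case E2: (A y0 n) => //= _.
  + by exists y0; rewrite ?E1 ?E2.
  + apply: (strict_sum (p := fun y => A y n) (q := fun y => A n y) y0X); rewrite ?E1 ?E2 //.
    change (cs X A n <= rs X A n); by rewrite (Hrc n nX).
have [j jX /andP [Ajn Anj]] : exists2 j, j \in X & A j n && ~~ A n j.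
  apply: (strict_sum (p := fun y => A n y) (q := fun y => A y n) iX) => //.
  change (rs X A n <= cs X A n); by rewrite (Hrc n nX).
have [B [H1 H2 H3]] : exists B, [/\ forall x, rs X B x = rs X A x, forall x, cs X B x = cs X A x
             & mis X B n < mis X A n].
  case: (leqP (cs X A i) (cs X A j)) => Hij.
    exact: (step_row nX iX jX Ani Ain Anj Ajn Hij).
  apply: (step_col nX iX jX Ani Ain Anj Ajn); rewrite (Hrc i iX) (Hrc j jX); exact: ltnW.
have [C [C1 C2 C3]] : exists C, [/\ forall x, rs X C x = rs X B x, forall x, cs X C x = cs X B x
             & forall y, y \in X -> C n y = C y n].
  apply: IH; first by rewrite -ltnS (leq_trans H3 Hk).
  by move=> x xX; rewrite H1 H2 Hrc.
exists C; split => // x; by rewrite ?C1 ?C2 ?H1 ?H2.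
Qed.

Lemma sumD1 X n (F : T -> nat) : n \in X ->
  \sum_(j in X) F j = F n + \sum_(j in X :\ n) F j.
Proof.
move=> nX; rewrite (bigD1 n nX) /=; congr (_ + _).
by apply: eq_bigl => j; rewrite !inE andbC.
Qed.

Lemma symm_real k : forall X, #|X| <= k -> forall A,
  (forall x, x \in X -> rs X A x = cs X A x) ->
  exists S, (forall x y, S x y = S y x) /\ forall x, x \in X -> rs X S x = rs X A x.
Proof.
elim: k => [|k IH] X HX A Hrc.
  exists (fun _ _ => false); split => // x xX.
  by move: HX; rewrite (cardD1 x) xX.
case: (set_0Vmem X) => [-> | [n nX]].
  by exists (fun _ _ => false); split => // x; rewrite inE.
have [B [B1 B2 B3]] := agree nX (leqnn _) Hrc.
have HX' : #|X :\ n| <= k by move: HX; rewrite (cardsD1 n X) nX.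
have [S' [S'sym S'rs]] : exists S, (forall x y, S x y = S y x) /\
    forall x, x \in X :\ n -> rs (X :\ n) S x = rs (X :\ n) B x.
  apply: IH => // x; rewrite inE => /andP [xn xX].
  have E1 := sumD1 (fun j => (B x j : nat)) nX.
  have E2 := sumD1 (fun j => (B j x : nat)) nX.
  have : rs X B x = cs X B x by rewrite B1 B2 Hrc.
  rewrite /rs /cs E1 E2 (B3 x xX) => /eqP; rewrite eqn_add2l => /eqP //.
pose S x y := if x == n then B n y && B y n else if y == n then B x n && B n x else S' x y.
exists S; split.
  move=> x y; rewrite /S; case: (x =P n) => [Ex|xn]; case: (y =P n) => [Ey|yn].
  - by subst.
  - by rewrite andbC.
  - by rewrite andbC.
  - exact: S'sym.
move=> x xX; rewrite -B1.
case: (x =P n) => [->|xn].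
  apply: eq_bigr => y yX; by rewrite /S eqxx (B3 y yX) andbb.
rewrite /rs (sumD1 _ nX) [in RHS](sumD1 _ nX).
have -> : (S x n : nat) = B x n by rewrite /S eqxx (introF eqP xn) -(B3 x xX) andbb.
congr (_ + _).
have xX' : x \in X :\ n by rewrite !inE xX andbT; apply/eqP.
rewrite -[RHS]/(rs (X :\ n) B x) -(S'rs x xX'); apply: eq_bigr => y; rewrite !inE => /andP [yn _].
by rewrite /S (introF eqP xn) (negbTE yn).
Qed.
End M.

Lemma match_seq (V1 V2 : eqType) (f : V1 -> nat) (g : V2 -> nat) (y0 : V2) s1 :
  forall s2, uniq s1 -> uniq s2 -> perm_eq (map f s1) (map g s2) ->
  exists h : V1 -> V2, forall x, x \in s1 ->
    [/\ h x \in s2, g (h x) = f x & forall z, z \in s1 -> h x = h z -> x = z].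
Proof.
elim: s1 => [|x s1 IH] s2 u1 u2 Hp.
  by exists (fun _ => y0).
move: u1 => /= /andP [xs1 u1].
have : f x \in map g s2 by rewrite -(perm_mem Hp) mem_head.
case/mapP => y ys2 Efy.
have Hp' : perm_eq (map f s1) (map g (rem y s2)).
  have := perm_trans Hp (perm_map g (perm_to_rem ys2)).
  by rewrite /= -Efy perm_cons.
have [h' Hh'] := IH _ u1 (rem_uniq y u2) Hp'.
have yrem : y \notin rem y s2 by rewrite mem_rem_uniqF.
exists (fun z => if z == x then y else h' z) => z; rewrite inE => /orP [/eqP ->| zs].
  rewrite eqxx; split => // w; rewrite inE => /orP [/eqP -> //| ws].
  case: eqP => [-> // | _] Ey.
  have [Hw _ _] := Hh' w ws; by move: Hw; rewrite -Ey (negbTE yrem).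
have zx : z != x by apply: contraNneq xs1 => <-.
have [Hz1 Hz2 Hz3] := Hh' z zs.
rewrite (negbTE zx); split => //; first exact: (mem_rem Hz1).
move=> w; rewrite inE => /orP [/eqP -> | ws].
  by rewrite eqxx => Ez; move: Hz1; rewrite Ez (negbTE yrem).
case: eqP => [Ew|_]; last exact: (Hz3 w ws).
by move=> Ez; move: Hz1; rewrite Ez (negbTE yrem).
Qed.

Lemma card_sum (V : finType) (p : pred V) : #|[pred x | p x]| = \sum_x (p x : nat).
Proof. rewrite -sum1_card big_mkcond /=; apply: eq_bigr => x _; rewrite inE; by case: (p x). Qed.

Lemma sumT (V : finType) (F : V -> nat) : \sum_(j in [set: V]) F j = \sum_j F j.
Proof. by apply: eq_bigl => j; rewrite inE. Qed.

Theorem theorem1 (P : seq nat) : mirror_bigraphic P <-> bigraphic P P.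
Proof.
split; first by case.
move=> [V1 [V2 [E [H1 H2]]]].
have Hp : perm_eq (map (deg1 E) (enum V1)) (map (deg2 E) (enum V2)).
  by apply: (perm_trans H1); rewrite perm_sym.
split; first by exists V1, V2, E.
case: (pickP (fun _ : V2 => true)) => [w0 _ | Hn]; last first.
  have E2 : enum V2 = [::].
    case Ee: (enum V2) => [//|w s]; by have := Hn w.
  exists V2, V2, (fun _ _ => false); split.
    exists id; split => //; by exists id.
  by move: H2; rewrite /realizes E2.
have [h Hh] := match_seq w0 (enum_uniq V1) (enum_uniq V2) Hp.
have hinj : injective h.
  move=> x z; have [_ _ Hi] := Hh x (mem_enum _ x); apply: Hi; exact: mem_enum.
have hbij : bijective h.
  apply: inj_card_bij hinj _.
  by rewrite !cardE -(size_map (deg1 E)) -(size_map (deg2 E)) (perm_size Hp).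
pose A u v := E u (h v).
have Hrs : forall u, rs [set: V1] A u = deg1 E u.
  move=> u; rewrite /rs sumT /deg1 card_sum (reindex h (onW_bij _ hbij)) //.
have Hcs : forall v, cs [set: V1] A v = deg1 E v.
  move=> v; rewrite /cs sumT.
  have [_ <- _] := Hh v (mem_enum _ v).
  by rewrite /deg2 card_sum.
have [S [Ssym Srs]] := @symm_real V1 _ [set: V1] (leqnn _) A (fun x _ => etrans (Hrs x) (esym (Hcs x))).
have HS : forall u, deg1 S u = deg1 E u.
  move=> u; rewrite /deg1 card_sum -sumT -[RHS]Hrs -Srs //; by rewrite inE.
exists V1, V1, S; split.
  exists id; split; first by exists id.
  by move=> u v; apply: Ssym.
split.
  by rewrite (eq_map HS).
have -> : map (deg2 S) (enum V1) = map (deg1 E) (enum V1).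
  apply: eq_map => w; rewrite -HS /deg1 /deg2; apply: eq_card => u; by rewrite !inE Ssym.
done.
Qed.
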